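(* Let $\{\varphi_n\},\{\psi_n\}$ be biorthogonal sequences in a Hilbert space $\mathcal H$ forming a $(\mathcal D,\mathcal E)$-quasi basis for dense subspaces $\mathcal D,\mathcal E$ with $D_\psi\subseteq\mathcal D\subseteq D(\varphi)$, $D_\varphi\subseteq\mathcal E\subseteq D(\psi)$. Suppose there is a real sequence $\{r_n\}$ with $r_n\ge1$ for all $n$ such that $D(\varphi_r):=\{x\in\mathcal H:\sum_k r_k^2|\langle x,\varphi_k\rangle|^2<\infty\}$ satisfies $D(\varphi_r)\subseteq\mathcal D$ and $D(\varphi_r)$ is dense in $\mathcal H$. Then $D_\varphi$ is dense in $\mathcal H$ and $(\{\varphi_n\},\{\psi_n\})$ is a $(D(\varphi),D_\varphi)$-quasi basis.
   Context: Inner product linear in the first argument. Biorthogonal: $\langle\varphi_n,\psi_m\rangle=\delta_{nm}$. $D_\varphi,D_\psi$ are the linear spans; $D(\varphi)=\{x:\sum_n|\langle x,\varphi_n\rangle|^2<\infty\}$, similarly $D(\psi)$. The pair is a $(\mathcal D,\mathcal E)$-quasi basis if $\sum_k\langle x,\varphi_k\rangle\langle\psi_k,y\rangle=\langle x,y\rangle$ for all $x\in\mathcal D$, $y\in\mathcal E$. *)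

(* Defs.v *)
From mathcomp Require Import all_boot all_order all_algebra.
From mathcomp Require Import reals.
Import Order.TTheory GRing.Theory Num.Theory.
From mathcomp Require Export complex.

Set Implicit Arguments.
Unset Strict Implicit.
Unset Printing Implicit Defensive.

Local Open Scope ring_scope.
Local Open Scope complex_scope.

Section Hilbert.
Variable R : realType.
Variable V : lmodType R[i].
Variable ip : V -> V -> R[i].   (* inner product, linear in the first argument *)

Definition is_inner_product : Prop :=
  [/\ (forall (a : R[i]) (x y z : V), ip (a *: x + y) z = a * ip x z + ip y z),
      (forall x y : V, ip y x = (ip x y)^*),
      (forall x : V, exists t : R, 0 <= t /\ ip x x = t%:C)
    & (forall x : V, ip x x = 0 -> x = 0)].

Definition hnorm (x : V) : R := Num.sqrt (Normc.normc (ip x x)).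

Definition hcomplete : Prop :=
  forall u : nat -> V,
    (forall eps : R, 0 < eps -> exists N : nat,
        forall m n : nat, (N <= m)%N -> (N <= n)%N -> hnorm (u m - u n) < eps) ->
    exists l : V, forall eps : R, 0 < eps -> exists N : nat,
        forall n : nat, (N <= n)%N -> hnorm (u n - l) < eps.

Definition hilbert_space : Prop := is_inner_product /\ hcomplete.

Definition subspace (S : V -> Prop) : Prop :=
  S 0 /\ forall (a : R[i]) (x y : V), S x -> S y -> S (a *: x + y).

Definition dense (S : V -> Prop) : Prop :=
  forall (x : V) (eps : R), 0 < eps -> exists y : V, S y /\ hnorm (x - y) < eps.

Definition span_seq (f : nat -> V) : V -> Prop :=
  fun x => exists (n : nat) (c : nat -> R[i]), x = \sum_(k < n) c k *: f k.

(* D(f) = { x : sum_k |<x, f_k>|^2 < oo } (nonnegative series with bounded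
   partial sums) *)
Definition Dom (f : nat -> V) : V -> Prop :=
  fun x => exists M : R, forall n : nat,
      \sum_(k < n) Normc.normc (ip x (f k)) ^+ 2 <= M.

Definition Dom_r (r : nat -> R) (f : nat -> V) : V -> Prop :=
  fun x => exists M : R, forall n : nat,
      \sum_(k < n) (r k) ^+ 2 * Normc.normc (ip x (f k)) ^+ 2 <= M.

Definition biorthogonal (phi psi : nat -> V) : Prop :=
  forall n m : nat, ip (phi n) (psi m) = (n == m)%:R.

Definition series_to (a : nat -> R[i]) (l : R[i]) : Prop :=
  forall eps : R, 0 < eps -> exists N : nat,
    forall n : nat, (N <= n)%N -> Normc.normc (\sum_(k < n) a k - l) < eps.

Definition quasi_basis (phi psi : nat -> V) (D E : V -> Prop) : Prop :=
  forall x y : V, D x -> E y ->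
    series_to (fun k => ip x (phi k) * ip (psi k) y) (ip x y).

End Hilbert.

(* Main.v *)
Require Import Defs.
From mathcomp Require Import all_boot all_order all_algebra.
From mathcomp Require Import reals complex.
From mathcomp Require Import ring lra.
Import Order.TTheory GRing.Theory Num.Theory.
Local Open Scope ring_scope.
Set Implicit Arguments.
Unset Strict Implicit.

Section Aux.
Local Open Scope complex_scope.
Variable R : realType.
Variable V : lmodType R[i].
Variable ip : V -> V -> R[i].
Hypothesis Hip : is_inner_product ip.

Notation cj := (@conjc _).
Lemma cD (a b : R[i]) : cj (a + b) = cj a + cj b. Proof. exact: rmorphD. Qed.
Lemma cM (a b : R[i]) : cj (a * b) = cj a * cj b. Proof. exact: rmorphM. Qed.
Lemma cN (a : R[i]) : cj (- a) = - cj a. Proof. exact: rmorphN. Qed.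
Lemma cB (a b : R[i]) : cj (a - b) = cj a - cj b. Proof. exact: rmorphB. Qed.
Lemma cK (a : R[i]) : cj (cj a) = a. Proof. exact: conjcK. Qed.
Lemma c0 : cj 0 = 0 :> R[i]. Proof. exact: rmorph0. Qed.

Lemma ipDl x y z : ip (x + y) z = ip x z + ip y z.
Proof. by case: Hip => H _ _ _; rewrite -[x]scale1r H mul1r scale1r. Qed.

Lemma ip0l z : ip 0 z = 0.
Proof.
have h := ipDl 0 0 z; rewrite addr0 in h.
by have := congr1 (fun t => t - ip 0 z) h; rewrite addrK subrr => ->.
Qed.

Lemma ipZl a x z : ip (a *: x) z = a * ip x z.
Proof. by case: Hip => H _ _ _; rewrite -[a *: x]addr0 H ip0l addr0. Qed.

Lemma ipNl x z : ip (- x) z = - ip x z.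
Proof. by rewrite -scaleN1r ipZl mulN1r. Qed.

Lemma ipBl x y z : ip (x - y) z = ip x z - ip y z.
Proof. by rewrite ipDl ipNl. Qed.

Lemma ipC x y : ip y x = cj (ip x y).
Proof. by case: Hip. Qed.

Lemma ipDr x y z : ip z (x + y) = ip z x + ip z y.
Proof. by rewrite ipC ipDl cD -!ipC. Qed.

Lemma ipZr a x z : ip z (a *: x) = cj a * ip z x.
Proof. by rewrite ipC ipZl cM -ipC. Qed.

Lemma ip0r z : ip z 0 = 0.
Proof. by rewrite ipC ip0l c0. Qed.

Lemma ipNr x z : ip z (- x) = - ip z x.
Proof. by rewrite ipC ipNl cN -ipC. Qed.

Lemma ipBr x y z : ip z (x - y) = ip z x - ip z y.
Proof. by rewrite ipDr ipNr. Qed.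

Lemma ip_suml I (r : seq I) (Q : pred I) (F : I -> V) z :
  ip (\sum_(i <- r | Q i) F i) z = \sum_(i <- r | Q i) ip (F i) z.
Proof. exact: (big_morph (fun x => ip x z) (fun x y => ipDl x y z) (ip0l z)). Qed.

Lemma ip_sumr I (r : seq I) (Q : pred I) (F : I -> V) z :
  ip z (\sum_(i <- r | Q i) F i) = \sum_(i <- r | Q i) ip z (F i).
Proof. exact: (big_morph (fun x => ip z x) (fun x y => ipDr x y z) (ip0r z)). Qed.

Definition Nm x : R := complex.Re (ip x x).

Lemma ipxx x : ip x x = (Nm x)%:C /\ 0 <= Nm x.
Proof.
case: Hip => _ _ H _; rewrite /Nm; have [t [t0 e]] := H x; by rewrite e /=; split.
Qed.

Lemma ipxxE x : ip x x = (Nm x)%:C. Proof. by case: (ipxx x). Qed.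
Lemma Nm_ge0 x : 0 <= Nm x. Proof. by case: (ipxx x). Qed.

Lemma Nm0 x : Nm x = 0 -> x = 0.
Proof. case: Hip => _ _ _ H h; apply: H; by rewrite ipxxE h. Qed.

Lemma normcR (t : R) : 0 <= t -> Normc.normc t%:C = t.
Proof. by move=> t0 /=; rewrite expr0n addr0 sqrtr_sqr ger0_norm. Qed.

Lemma hnormE x : hnorm ip x = Num.sqrt (Nm x).
Proof. by rewrite /hnorm ipxxE normcR // Nm_ge0. Qed.

Lemma NmN x : Nm (- x) = Nm x.
Proof. by rewrite /Nm ipNl ipNr opprK. Qed.

Lemma hnormN x : hnorm ip (- x) = hnorm ip x.
Proof. by rewrite !hnormE NmN. Qed.

Lemma hnorm_lt x eps : 0 < eps -> (hnorm ip x < eps) = (Nm x < eps ^+ 2).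
Proof.
move=> e0; rewrite hnormE -{1}(ger0_norm (ltW e0)) -sqrtr_sqr ltr_sqrt //.
exact: exprn_gt0.
Qed.

Lemma mulcJ (a : R[i]) : a * cj a = (Normc.normc a ^+ 2)%:C.
Proof.
case: a => p q /=; rewrite sqr_sqrtr ?addr_ge0 ?sqr_ge0 //.
apply/eqP; rewrite eq_complex /=; apply/andP; split; apply/eqP; ring.
Qed.

Lemma nc_ge0 (a : R[i]) : 0 <= Normc.normc a.
Proof. by case: a => p q; exact: sqrtr_ge0. Qed.

Lemma CS2 x y : Normc.normc (ip x y) ^+ 2 <= Nm x * Nm y.
Proof.
have [y0|yn0] := eqVneq (Nm y) 0.
  by rewrite (Nm0 y0) ip0r Normc.normc0 expr0n /= /Nm ip0l /= mulr0.
have b0 : 0 < Nm y by rewrite lt_def yn0 Nm_ge0.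
set a := ip x y; set b := Nm y.
set t := a / b%:C.
have h0 := Nm_ge0 (x - t *: y).
have bC : b%:C != 0 by rewrite (inj_eq (@complexI _)).
have E : ip (x - t*:y) (x - t*:y) = (Nm x)%:C - a * cj a / b%:C.
  rewrite ipBl !ipBr !ipZl !ipZr -/a (ipC x y) -/a (ipxxE y) (ipxxE x) -/b.
  rewrite /t cM conjc_inv conjc_real.
  field. exact: bC.
have F : (Nm x - Normc.normc a ^+ 2 / b)%:C =
   (Nm x)%:C - (Normc.normc a ^+ 2)%:C / b%:C.
  by rewrite rmorphB rmorphM fmorphV.
rewrite mulcJ -F in E.
have : 0 <= Nm x - Normc.normc a ^+ 2 / b by rewrite /Nm E /= in h0.
by rewrite subr_ge0 ler_pdivrMr.
Qed.

Lemma CS x y : Normc.normc (ip x y) <= hnorm ip x * hnorm ip y.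
Proof.
rewrite !hnormE -sqrtrM ?Nm_ge0 //.
rewrite -[Normc.normc _]ger0_norm ?nc_ge0 // -sqrtr_sqr ler_sqrt ?CS2 //.
by rewrite mulr_ge0 ?Nm_ge0.
Qed.

Lemma small (a c : R) : 0 <= a -> 0 <= c ->
  (forall e, 0 < e -> a <= e * c) -> a = 0.
Proof.
move=> a0 c0 H; apply/eqP; rewrite eq_le a0 andbT; apply/negP => /negP.
rewrite -ltNge => ap.
have c1 : 0 < c + 1 by lra.
have := H (a / (c + 1)) (divr_gt0 ap c1).
set t := a / (c + 1).
have -> : a = t * (c + 1) by rewrite /t divfK // gt_eqF.
have tp : 0 < t by rewrite /t divr_gt0.
move=> h; nra.
Qed.

Lemma sum_delta (G : nat -> R[i]) j n : (j < n)%N ->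
  (forall k, (k < n)%N -> k != j -> G k = 0) -> \sum_(k < n) G k = G j.
Proof.
move=> jn H; rewrite (bigD1 (Ordinal jn)) //= big1 ?addr0 // => k kne.
by apply: H => //; apply: contra kne => /eqP e; apply/eqP/val_inj.
Qed.

Lemma sum_widen (F : nat -> R[i]) n m : (n <= m)%N ->
  \sum_(k < m) (if (k < n)%N then F k else 0) = \sum_(k < n) F k.
Proof. by move=> nm; rewrite [RHS](big_ord_widen m F nm) [RHS]big_mkcond. Qed.

End Aux.

Section Span.
Variable R : realType.
Variable V : lmodType R[i].
Variable f : nat -> V.

Lemma span0 : span_seq f 0.
Proof. by exists 0%N, (fun _ => 0); rewrite big_ord0. Qed.

Lemma span_f j : span_seq f (f j).
Proof.
exists j.+1, (fun k => (k == j)%:R); rewrite big_ord_recr /= eqxx scale1r.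
rewrite big1 ?add0r // => k _.
by rewrite ltn_eqF // scale0r.
Qed.

Lemma spanC a x y : span_seq f x -> span_seq f y -> span_seq f (a *: x + y).
Proof.
move=> [n1 [c1 ->]] [n2 [c2 ->]].
exists (maxn n1 n2), (fun k => a * (if (k < n1)%N then c1 k else 0) +
   (if (k < n2)%N then c2 k else 0)).
have e : forall n (c : nat -> R[i]), (n <= maxn n1 n2)%N ->
  \sum_(k < n) c k *: f k = \sum_(k < maxn n1 n2) (if (k < n)%N then c k else 0) *: f k.
  move=> n c nm; rewrite (big_ord_widen _ (fun k => c k *: f k) nm) big_mkcond.
  by apply: eq_bigr => k _; case: ifP => // _; rewrite scale0r.
rewrite (e n1 c1) ?leq_maxl // (e n2 c2) ?leq_maxr // scaler_sumr -big_split /=.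
by apply: eq_bigr => k _; rewrite scalerDl scalerA.
Qed.

Lemma spanD x y : span_seq f x -> span_seq f y -> span_seq f (x + y).
Proof. by move=> hx hy; rewrite -[x]scale1r; apply: spanC. Qed.

Lemma spanZ a x : span_seq f x -> span_seq f (a *: x).
Proof. by move=> hx; rewrite -[_ *: _]addr0; apply: spanC => //; apply: span0. Qed.

Lemma span_sum I (r : seq I) (Q : pred I) (F : I -> V) :
  (forall k, Q k -> span_seq f (F k)) ->
  span_seq f (\sum_(i <- r | Q i) F i).
Proof.
move=> H; apply: big_ind => //; [exact: span0 | exact: spanD].
Qed.
End Span.

Section GS.
Local Open Scope complex_scope.
Variable R : realType.
Variable V : lmodType R[i].
Variable ip : V -> V -> R[i].
Hypothesis Hip : is_inner_product ip.
Variable phi : nat -> V.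

Definition coef (w z : V) : R[i] := ip w z / ip z z.

Fixpoint gs (n : nat) : nat -> V :=
  match n with
  | 0 => fun _ => 0
  | n'.+1 => fun k => if (k < n')%N then gs n' k
      else phi n' - \sum_(j < n') coef (phi n') (gs n' j) *: gs n' j
  end.

Definition u n := gs n.+1 n.

Lemma gs_stable n k : (k < n)%N -> gs n k = u k.
Proof.
elim: n => [//|n IH] kn /=.
case: ifP => [kn'|]; first exact: IH.
move=> /negbT; rewrite -leqNgt => nk.
have -> : k = n by apply/eqP; rewrite eqn_leq nk -ltnS kn.
by rewrite /u /= ltnn.
Qed.

Lemma uE n : u n = phi n - \sum_(j < n) coef (phi n) (u j) *: u j.
Proof.
rewrite {1}/u /= ltnn; congr (_ - _); apply: eq_bigr => j _.
by rewrite gs_stable.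
Qed.

Lemma db w z : coef w z * ip z z = ip w z.
Proof.
have [z0|zn0] := eqVneq (Nm ip z) 0.
  by rewrite (Nm0 Hip z0) !(ip0r Hip) mulr0.
rewrite /coef divfK // (ipxxE Hip) (inj_eq (@complexI _)) //.
Qed.

Lemma orth n j : (j < n)%N -> ip (u n) (u j) = 0.
Proof.
elim/ltn_ind: n j => n IH j jn.
have key : forall k, (k < n)%N -> k != j ->
    coef (phi n) (u k) * ip (u k) (u j) = 0.
  move=> k kn kj; case: (ltngtP k j) => [kj'|jk|e]; last by rewrite e eqxx in kj.
  - by rewrite (ipC Hip) (IH j jn k kj') c0 mulr0.
  - by rewrite (IH k kn j jk) mulr0.
rewrite uE (ipBl Hip) (ip_suml Hip).
under eq_bigr do rewrite (ipZl Hip).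
by rewrite (sum_delta (G := fun k => coef (phi n) (u k) * ip (u k) (u j)) jn key) db subrr.
Qed.

Lemma orth2 k j : k != j -> ip (u k) (u j) = 0.
Proof.
case: (ltngtP k j) => [kj|jk|//] _.
- by rewrite (ipC Hip) orth // c0.
- by rewrite orth.
Qed.

Lemma ip_comb m (c : nat -> R[i]) j : (j < m)%N ->
  ip (\sum_(k < m) c k *: u k) (u j) = c j * ip (u j) (u j).
Proof.
move=> jm; rewrite (ip_suml Hip).
under eq_bigr do rewrite (ipZl Hip).
apply: (sum_delta (G := fun k => c k * ip (u k) (u j))) => // k _ kj.
by rewrite orth2 // mulr0.
Qed.

Definition P v m := \sum_(k < m) coef v (u k) *: u k.

Lemma P_ip v m j : (j < m)%N -> ip (P v m) (u j) = ip v (u j).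
Proof. by move=> jm; rewrite /P (ip_comb (fun k => coef v (u k))) // db. Qed.

Lemma ipDD w y : ip (w + y) (w + y) = ip w w + ip w y + (ip y w + ip y y).
Proof. by rewrite (ipDl Hip) !(ipDr Hip). Qed.

Lemma pyth x n (c : nat -> R[i]) :
  let y := \sum_(k < n) c k *: u k in
  (forall k, (k < n)%N -> ip (x - y) (u k) = 0) ->
  Nm ip x = Nm ip (x - y) + Nm ip y.
Proof.
move=> y H.
have h1 : ip (x - y) y = 0.
  rewrite (ip_sumr Hip) big1 // => k _.
  by rewrite (ipZr Hip) H // mulr0.
have h2 : ip y (x - y) = 0 by rewrite (ipC Hip) h1 c0.
have e : ip x x = ip (x - y) (x - y) + ip y y.
  have := ipDD (x - y) y.
  by rewrite subrK h1 h2 addr0 add0r.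
have e2 : (Nm ip (x - y) + Nm ip y)%:C = (Nm ip (x - y))%:C + (Nm ip y)%:C.
  by rewrite rmorphD.
by move: e; rewrite !(ipxxE Hip) -e2 => -[].
Qed.

Lemma u_span n : span_seq phi (u n).
Proof.
elim/ltn_ind: n => n IH; rewrite uE.
apply: spanD; first exact: span_f.
rewrite -scaleN1r; apply: spanZ; apply: span_sum => k _.
by apply: spanZ; apply: IH.
Qed.

Lemma perp_phi z : (forall j, ip z (u j) = 0) -> forall n, ip z (phi n) = 0.
Proof.
move=> H n.
have -> : phi n = u n + \sum_(j < n) coef (phi n) (u j) *: u j by rewrite uE subrK.
rewrite (ipDr Hip) H add0r (ip_sumr Hip) big1 // => k _.
by rewrite (ipZr Hip) H mulr0.
Qed.

End GS.

Section Dense.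
Local Open Scope complex_scope.
Variable R : realType.
Variable V : lmodType R[i].
Variable ip : V -> V -> R[i].
Hypothesis Hip : is_inner_product ip.
Hypothesis Hc : hcomplete ip.
Variable phi : nat -> V.
Hypothesis Hperp : forall z, (forall n, ip z (phi n) = 0) -> z = 0.

Lemma hnorm_ge0 x : 0 <= hnorm ip x.
Proof. exact: sqrtr_ge0. Qed.

Lemma span_dense : dense ip (span_seq phi).
Proof.
move=> v eps e0.
pose Pm := P ip phi v.
pose s m := Nm ip (Pm m).
have sP1 : forall m, s m <= Nm ip v.
  move=> m; rewrite (pyth Hip (phi := phi) (x := v) (n := m) (c := fun k => coef ip v (u ip phi k))).
    by rewrite lerDr (Nm_ge0 Hip).
  by move=> k km; rewrite (ipBl Hip) -/(P ip phi v m) (P_ip Hip) // subrr.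
have sP2 : forall n m, (n <= m)%N -> Nm ip (Pm m - Pm n) = s m - s n.
  move=> n m nm; rewrite /s.
  rewrite [X in _ = X - _](pyth Hip (phi := phi) (x := Pm m) (n := n) (c := fun k => coef ip v (u ip phi k))).
    by rewrite addrK.
  move=> k kn; rewrite (ipBl Hip) -/(P ip phi v n) /Pm.
  rewrite (P_ip Hip) ?(P_ip Hip) ?subrr //.
  exact: leq_trans kn nm.
have smono : forall n m, (n <= m)%N -> s n <= s m.
  by move=> n m nm; rewrite -subr_ge0 -sP2 // (Nm_ge0 Hip).
have HS : classical_sets.has_sup (fun y => exists m, y = s m).
  split; first by exists (s 0%N), 0%N.
  by exists (Nm ip v) => y [m ->]; apply: sP1.
have cauchy : forall e, 0 < e -> exists N, forall m n, (N <= m)%N -> (N <= n)%N ->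
    hnorm ip (Pm m - Pm n) < e.
  move=> e ep.
  have e2 : 0 < e ^+ 2 by exact: exprn_gt0.
  have [y [N ->] hN] := sup_adherent e2 HS.
  exists N => m n Hm Hn.
  wlog nm : m n Hm Hn / (n <= m)%N.
    move=> W; case: (leqP n m) => [nm|/ltnW mn]; first exact: W.
    by rewrite -opprB (hnormN Hip); exact: (W n m Hn Hm mn).
  rewrite (hnorm_lt Hip) // sP2 //.
  have h1 : s m <= reals.sup (fun y => exists m, y = s m).
    by apply: (sup_upper_bound HS); exists m.
  have h2 := smono _ _ Hn.
  lra.
have [l Hl] := Hc cauchy.
have orthl : forall j, ip (v - l) (u ip phi j) = 0.
  move=> j; apply: (Normc.eq0_normc (R := R)).
  apply: (small (c := hnorm ip (u ip phi j))) => //; first exact: nc_ge0.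
    exact: hnorm_ge0.
  move=> e ep; have [N HN] := Hl e ep.
  pose n := maxn N j.+1.
  have -> : v - l = (v - Pm n) + (Pm n - l) by rewrite addrA subrK.
  rewrite (ipDl Hip) (ipBl Hip) (P_ip Hip) ?leq_maxr // subrr add0r.
  apply: le_trans (CS Hip _ _) _.
  apply: ler_wpM2r; first exact: hnorm_ge0.
  by apply: ltW; apply: HN; rewrite leq_maxl.
have vl : v = l.
  apply/eqP; rewrite -subr_eq0; apply/eqP; apply: Hperp.
  exact: (perp_phi Hip).
have [N HN] := Hl eps e0.
exists (Pm N); split.
  by apply: span_sum => k _; apply: spanZ; apply: u_span.
by rewrite -opprB (hnormN Hip) vl; apply: HN.
Qed.
End Dense.

Unset Implicit Arguments.
Set Strict Implicit.

Theorem proposition4p3 (R : realType) (V : lmodType R[i]) (ip : V -> V -> R[i])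
  (phi psi : nat -> V) (D E : V -> Prop) (r : nat -> R) :
  hilbert_space ip ->
  biorthogonal ip phi psi ->
  subspace D -> subspace E -> dense ip D -> dense ip E ->
  quasi_basis ip phi psi D E ->
  (forall x, span_seq psi x -> D x) -> (forall x, D x -> Dom ip phi x) ->
  (forall x, span_seq phi x -> E x) -> (forall x, E x -> Dom ip psi x) ->
  (forall n, 1 <= r n) ->
  (forall x, Dom_r ip r phi x -> D x) ->
  dense ip (Dom_r ip r phi) ->
  dense ip (span_seq phi) /\ quasi_basis ip phi psi (Dom ip phi) (span_seq phi).
Proof.
move=> [Hip Hc] Hbo HDs HEs HDd HEd Hqb HpsiD HDphi HphiE HEpsi Hr1 HrD Hrd.
split.
- apply: (span_dense Hip Hc) => z hz.
  have Dz : D z.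
    apply: HrD; exists 0 => n; rewrite big1 // => k _.
    by rewrite hz Normc.normc0 [0 ^+ 2]expr2 mul0r mulr0.
  have Ez : forall y, E y -> ip z y = 0.
    move=> y Ey; apply: (Normc.eq0_normc (R:=R)).
    apply: (small (c := 1)) => //; first exact: nc_ge0.
    move=> e ep; have [N HN] := Hqb z y Dz Ey e ep.
    have := HN N (leqnn N); rewrite big1 => [|k _]; last by rewrite hz mul0r.
    by rewrite sub0r normcN mulr1 => h; exact: ltW.
  apply: (Nm0 Hip); apply: (small (c := hnorm ip z)).
  + exact: Nm_ge0.
  + exact: hnorm_ge0.
  move=> e ep; have [y [Ey hy]] := HEd z e ep.
  have -> : Nm ip z = Normc.normc (ip z (z - y)).
    by rewrite (ipBr Hip) (Ez y Ey) subr0 (ipxxE Hip) normcR // Nm_ge0.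
  apply: le_trans (CS Hip _ _) _.
  rewrite [e * _]mulrC; apply: ler_wpM2l; first exact: hnorm_ge0.
  exact: ltW.
- move=> x y _ [n [c ->]] e ep; exists n => m nm.
  have key : forall k, ip (psi k) (\sum_(j < n) c j *: phi j) =
      if (k < n)%N then conjc (c k) else 0.
    move=> k; rewrite (ip_sumr Hip).
    under eq_bigr do rewrite (ipZr Hip) (ipC Hip (phi _)) Hbo conjc_nat.
    case: ifP => kn.
      rewrite (sum_delta (G := fun j => conjc (c j) * (j == k)%:R) kn) ?eqxx ?mulr1 //.
      by move=> j _ jk; rewrite (negbTE jk) mulr0.
    rewrite big1 // => j _.
    have jk : (j < k)%N by apply: (leq_trans (ltn_ord j)); rewrite leqNgt kn.
    by rewrite ltn_eqF // mulr0.
  under eq_bigr do rewrite key.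
  have -> : \sum_(k < m) ip x (phi k) * (if (k < n)%N then conjc (c k) else 0)
     = \sum_(k < m) (if (k < n)%N then ip x (phi k) * conjc (c k) else 0).
    by apply: eq_bigr => k _; case: ifP => _ //; rewrite mulr0.
  rewrite (sum_widen (fun k => ip x (phi k) * conjc (c k)) nm).
  rewrite (ip_sumr Hip).
  under [X in _ - X]eq_bigr do rewrite (ipZr Hip) mulrC.
  by rewrite subrr Normc.normc0.
Qed.
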